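(* Let $p,q\in(0,\infty]$ with $\min\{p,q\}<\infty$. Then the embedding operator $I\colon\ell^{p,q}\to c_0$ is maximally non-compact, i.e. $\alpha(I)=\|I\|$.
   Context: For a scalar sequence $a=(a_n)$, its decreasing rearrangement is $a^*_n=\inf\{\omega>0:\#\{k:|a_k|>\omega\}\le n-1\}$. For $p,q\in(0,\infty]$, the Lorentz sequence space $\ell^{p,q}$ consists of all sequences $a$ with $\|a\|_{p,q}<\infty$, where $\|a\|_{p,q}=\big(\sum_{n=1}^\infty (a_n^* )^q n^{q/p-1}\big)^{1/q}$ if $q<\infty$, and $\|a\|_{p,\infty}=\sup_{n}n^{1/p}a_n^*$; convention $1/\infty=0$. $c_0$ is the space of sequences converging to $0$ with the sup norm. For a bounded map $T\colon X\to Y$ with closed unit balls $B_X,B_Y$, the ball measure of non-compactness is $\alpha(T)=\inf\{r>0:\ T(B_X)\subset\bigcup_{i=1}^m (y_i+rB_Y)\text{ for some } m\in\mathbb{N},\ y_i\in Y\}$, $\|T\|=\sup_{x\in B_X}\|Tx\|$, and $T$ is maximally non-compact if $\alpha(T)=\|T\|$. *)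

(* Defs.v *)
From HB Require Import structures.
From mathcomp Require Import all_boot all_order all_algebra.
From mathcomp Require Import all_classical all_reals all_analysis.
Set Implicit Arguments. Unset Strict Implicit. Unset Printing Implicit Defensive.
Import Order.TTheory GRing.Theory Num.Theory.
Import numFieldNormedType.Exports.
Local Open Scope classical_set_scope.
Local Open Scope ring_scope.

Section Lorentz.
Variable R : realType.

(* #{k : |a_k| > w} <= m : the set is contained in a list of length <= m *)
Definition count_gt_le (a : nat -> R) (w : R) (m : nat) : Prop :=
  exists s : seq nat, (size s <= m)%N /\ [set k | w < `|a k|] `<=` [set` s].

(* decreasing rearrangement a^*_n (meaningful for n >= 1), value in [0,+oo] *)
Definition decr_rearr (a : nat -> R) (n : nat) : \bar R :=
  ereal_inf [set w%:E | w in [set w : R | 0 < w /\ count_gt_le a w n.-1]].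

Definition einv (p : \bar R) : R :=
  match p with +oo%E => 0 | _ => (fine p)^-1 end.

Definition lorentz_norm (p q : \bar R) (a : nat -> R) : \bar R :=
  match q with
  | +oo%E => ereal_sup [set ((n%:R `^ einv p)%:E * decr_rearr a n)%E
                         | n in [set n : nat | (1 <= n)%N]]
  | _ => let r := fine q in
      poweR (\sum_(1 <= n <oo) (poweR (decr_rearr a n) r
                                * (n%:R `^ (r * einv p - 1))%:E))%E r^-1
  end.

Definition lorentz_space (p q : \bar R) : set (nat -> R) :=
  [set a | (lorentz_norm p q a < +oo)%E].

Definition lorentz_ball (p q : \bar R) : set (nat -> R) :=
  [set a | (lorentz_norm p q a <= 1)%E].

Definition c0 : set (nat -> R) := [set a | a @ \oo --> 0].

Definition supnorm (a : nat -> R) : \bar R := ereal_sup (range (fun k => (`|a k|)%:E)).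

Definition embed_norm (p q : \bar R) : \bar R :=
  ereal_sup [set supnorm a | a in lorentz_ball p q].

Definition embed_alpha (p q : \bar R) : \bar R :=
  ereal_inf [set r%:E | r in [set r : R | 0 < r /\
     exists ys : seq (nat -> R), (forall y, y \in ys -> c0 y) /\
       forall a, lorentz_ball p q a ->
         exists2 y, y \in ys & exists b, c0 b /\ (supnorm b <= 1)%E /\
                                         a = y + r *: b]].
End Lorentz.

(* Main.v *)
Require Import Defs.
From mathcomp Require Import all_boot all_order all_algebra.
From mathcomp Require Import all_classical all_reals all_analysis.
Import Order.TTheory GRing.Theory Num.Theory.
Import numFieldNormedType.Exports.
Set Implicit Arguments. Unset Strict Implicit. Unset Printing Implicit Defensive.
Local Open Scope classical_set_scope.
Local Open Scope ring_scope.

Section Aux.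
Variable R : realType.
Implicit Types (a : nat -> R).

Lemma decr_ge0 a n : (0%R <= decr_rearr a n)%E.
Proof.
apply/ereal_infP => _ [w [w0 _] <-]; by rewrite lee_fin ltW.
Qed.

Lemma decr1_ge a k : ((`|a k|)%:E <= decr_rearr a 1)%E.
Proof.
apply/ereal_infP => _ [w [w0 [s [hs sub]]] <-]; rewrite lee_fin.
rewrite leNgt; apply/negP => hw.
have := sub k hw; move: hs; rewrite leqn0 => /nilP -> //.
Qed.

Lemma decr_le a n w : 0 < w -> count_gt_le a w n.-1 -> (decr_rearr a n <= w%:E)%E.
Proof. by move=> w0 c; apply: ereal_inf_lbound; exists w. Qed.

Lemma decr_lt a n (eps : R) : (decr_rearr a n < eps%:E)%E ->
  exists w, [/\ 0 < w, w < eps & count_gt_le a w n.-1].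
Proof.
by case/ereal_inf_lt => _ [w [w0 c] <-]; rewrite lte_fin => lt; exists w.
Qed.

End Aux.
Section Aux2.
Variable R : realType.
Lemma powR_le1 (x r : R) : (0 <= r)%R -> (0 <= x <= 1)%R -> (x `^ r <= 1)%R.
Proof.
move=> r0 /andP[x0 x1].
have -> : (1:R) = 1 `^ r by rewrite powR1.
by rewrite ge0_ler_powR// nnegrE.
Qed.

Lemma powR_le1_inv (x r : R) : (0 < r)%R -> (0 <= x)%R -> (x `^ r <= 1)%R -> (x <= 1)%R.
Proof.
move=> r0 x0 h.
have -> : x = (x `^ r) `^ r^-1.
  by rewrite -powRrM mulfV ?gt_eqF// powRr1.
apply: powR_le1; first by rewrite invr_ge0 ltW.
by rewrite powR_ge0 h.
Qed.

Local Open Scope ereal_scope.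
Lemma poweR_le1 (x : \bar R) (r : R) : (0 <= r)%R -> 0 <= x <= 1 -> poweR x r <= 1.
Proof.
move=> r0; case: x => [x| |] //=.
  by rewrite !lee_fin => h; apply: powR_le1.
by move=> /andP[_]; rewrite leNgt ltry.
Qed.

Lemma poweR_le1_inv (x : \bar R) (r : R) : (0 < r)%R -> 0 <= x -> poweR x r <= 1 -> x <= 1.
Proof.
move=> r0; case: x => [x| |] //=; rewrite ?lee_fin.
  exact: powR_le1_inv.
by rewrite gt_eqF.
Qed.

End Aux2.
Section Ev.
Variable R : realType.
Local Open Scope ereal_scope.

Definition ev (N : nat) : nat -> R := fun i => if i == N then 1%R else 0%R.

Lemma ev_norm N i : (`|ev N i| <= 1)%R.
Proof. by rewrite /ev; case: ifP; rewrite ?normr1 ?normr0. Qed.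

Lemma ev_decr1 N : decr_rearr (ev N) 1 <= 1.
Proof.
apply: decr_le => //; exists [::]; split => // k /=.
by rewrite ltNge ev_norm.
Qed.

Lemma ev_decr N n : (1 < n)%N -> decr_rearr (ev N) n = 0.
Proof.
move=> n1; apply/eqP; rewrite eq_le (decr_ge0 (ev N) n) andbT.
apply/lee_addgt0Pr => e e0; rewrite add0e; apply: decr_le => //.
exists [:: N]; split; first by case: n n1 => [|[|n]].
move=> k /=; rewrite /ev; case: ifP => [/eqP -> _|_]; first by rewrite mem_seq1.
by rewrite normr0 ltNge ltW.
Qed.

Lemma ev_ball (p q : \bar R) N : 0 < q -> lorentz_ball p q (ev N).
Proof.
rewrite /lorentz_ball /lorentz_norm.
case: q => [r| |] //; rewrite ?lte_fin /= => r0.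
  rewrite (nneseries_split _ 1); last first.
    by move=> k _; rewrite mule_ge0 ?poweR_ge0// lee_fin powR_ge0.
  rewrite eseries0; last first.
    by move=> i i2 _; rewrite ev_decr// poweR0r ?gt_eqF// mul0e.
  rewrite adde0 big_nat1 powR1 mule1.
  apply: poweR_le1; first by rewrite invr_ge0 ltW.
  rewrite poweR_ge0 /=; apply: poweR_le1; first exact: ltW.
  by apply/andP; split; [exact: decr_ge0 | exact: ev_decr1].
apply/ereal_supP => _ [n /= n1 <-].
case: n n1 => [|[|n]] //= _.
  by rewrite powR1 mul1e ev_decr1.
by rewrite ev_decr// mule0.
Qed.

End Ev.
Section Ball.
Variable R : realType.
Local Open Scope ereal_scope.
Implicit Types (a : nat -> R) (p q : \bar R).

Lemma ball_decr1 p q a : 0 < q -> lorentz_ball p q a -> decr_rearr a 1 <= 1.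
Proof.
rewrite /lorentz_ball /lorentz_norm.
case: q => [r| |] //; rewrite ?lte_fin /= => r0.
  pose f := fun n : nat => poweR (decr_rearr a n) r * (n%:R `^ (r * einv p - 1))%:E.
  have f0 : forall n, (1 <= n)%N -> 0%R <= f n.
    by move=> n _; rewrite /f mule_ge0 ?poweR_ge0// lee_fin powR_ge0.
  rewrite -/f.
  move=> h.
  have ir0 : (0 < r^-1)%R by rewrite invr_gt0.
  have S1 := poweR_le1_inv ir0  (nneseries_ge0 (fun n n1 _ => f0 n n1)) h.
  have := le_trans (nneseries_lim_ge 2 (fun n n1 _ => f0 n n1)) S1.
  rewrite big_nat1 /f powR1 mule1 => h1.
  exact: poweR_le1_inv r0 (decr_ge0 _ _) h1.
move=> h; apply: le_trans h; apply: ereal_sup_ubound; exists 1%N => //=.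
by rewrite powR1 mul1e.
Qed.

Lemma ball_supnorm p q a : 0 < q -> lorentz_ball p q a -> supnorm a <= 1.
Proof.
move=> q0 h; apply/ereal_supP => _ [k _ <-].
exact: le_trans (decr1_ge a k) (ball_decr1 q0 h).
Qed.

End Ball.
Section Harm.
Variable R : realType.

Lemma harm_unbounded (M : R) : exists K, M < \sum_(1 <= n < K) (n%:R : R)^-1.
Proof.
have hnd : nondecreasing_seq (series (@harmonic R)).
  apply: nondecreasing_series => n _ _; exact: harmonic_ge0.
have H := nondecreasing_dvgn_lt hnd (@dvg_harmonic R).
have [K HK] := filter_ex (proj1 (cvgryPgt _) H M).
exists K.+1; rewrite big_add1 /=.
by move: HK; rewrite /series /=.
Qed.

End Harm.
Section C0.
Variable R : realType.
Local Open Scope ereal_scope.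
Implicit Types (a : nat -> R) (p q : \bar R).

Lemma einv_ge0 p : 0 < p -> (0 <= einv p)%R.
Proof. by case: p => [P| |] //=; rewrite lte_fin => P0; rewrite invr_ge0 ltW. Qed.

Lemma ball_small p q a : 0 < p -> 0 < q -> (p < +oo \/ q < +oo) ->
  lorentz_ball p q a -> forall eps : R, (0 < eps)%R ->
  exists n, (1 <= n)%N /\ decr_rearr a n < eps%:E.
Proof.
move=> p0 q0 pq h eps eps0.
apply: contrapT => hn.
have ge : forall n, (1 <= n)%N -> eps%:E <= decr_rearr a n.
  move=> n n1; rewrite leNgt; apply/negP => lt; apply: hn; by exists n.
move: h; rewrite /lorentz_ball /lorentz_norm.
case: q q0 pq => [r| |] //; rewrite ?lte_fin /= => r0 pq.
- pose f := fun n : nat => poweR (decr_rearr a n) r * (n%:R `^ (r * einv p - 1))%:E.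
  have f0 : forall n, (1 <= n)%N -> 0%R <= f n.
    by move=> n _; rewrite /f mule_ge0 ?poweR_ge0// lee_fin powR_ge0.
  rewrite -/f => h.
  have ir0 : (0 < r^-1)%R by rewrite invr_gt0.
  have S1 := poweR_le1_inv ir0 (nneseries_ge0 (fun n n1 _ => f0 n n1)) h.
  pose c := (eps `^ r)%R.
  have c0 : (0 < c)%R by rewrite powR_gt0.
  have fge : forall n, (1 <= n)%N -> (c * (n%:R)^-1)%:E <= f n.
    move=> n n1; rewrite EFinM /f; apply: lee_pmul.
    - by rewrite lee_fin ltW.
    - by rewrite lee_fin invr_ge0.
    - have := ge n n1; have := decr_ge0 a n.
      move: (decr_rearr a n) => d; case: d => [x| |] //=.
        rewrite !lee_fin => x0 ex; rewrite /c ge0_ler_powR// ?nnegrE ?ltW//.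
      by move=> _ _; rewrite (gt_eqF r0) leey.
    - rewrite lee_fin -powR_inv1 ?ler0n//; apply: ler_powR.
        by rewrite (ler_nat _ 1 n).
      by rewrite lerBrDr addrC subrr; apply: mulr_ge0; [exact: ltW | exact: einv_ge0].
  have [K HK] := harm_unbounded (c^-1).
  have : \sum_(1 <= n < K) f n <= 1.
    exact: le_trans (nneseries_lim_ge K (fun n n1 _ => f0 n n1)) S1.
  apply/negP; rewrite -ltNge.
  apply: (@lt_le_trans _ _ (\sum_(1 <= n < K) (c * (n%:R)^-1)%:E)).
    rewrite sumEFin lte_fin -mulr_sumr.
    have ic : (0 < c^-1)%R by rewrite invr_gt0.
    by rewrite -(ltr_pM2l ic) mulr1 mulrA mulVf ?gt_eqF// mul1r.
  rewrite big_nat_cond [X in _ <= X]big_nat_cond; apply: lee_sum => n /andP[/andP[n1 _] _].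
  exact: fge.
- case: pq => // hp.
  case: p p0 hp => [P| |] //; rewrite lte_fin => P0 _ /=.
  move=> h.
  pose n := (Num.Def.trunc ((eps^-1) `^ P)).+1.
  have n1 : (1 <= n)%N by [].
  have hle : ((n%:R `^ P^-1) * eps <= 1)%R.
    rewrite -lee_fin; apply: le_trans h.
    apply: le_trans; last by apply: ereal_sup_ubound; exists n.
    by rewrite EFinM lee_wpmul2l ?lee_fin ?powR_ge0// ge.
  have : (n%:R `^ P^-1 <= eps^-1)%R.
    by rewrite -(ler_pM2r eps0) mulVf ?gt_eqF.
  move=> /(ge0_ler_powR (ltW P0)); rewrite !nnegrE powR_ge0 invr_ge0 ltW// => /(_ isT isT).
  rewrite -powRrM mulVf ?gt_eqF// powRr1 ?ler0n//.
  apply/negP; rewrite -ltNge; exact: truncnS_gt.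
Qed.

End C0.
Section Main.
Variable R : realType.
Local Open Scope ereal_scope.
Implicit Types (a : nat -> R) (p q : \bar R).

Lemma ball_c0 p q a : 0 < p -> 0 < q -> (p < +oo \/ q < +oo) ->
  lorentz_ball p q a -> c0 a.
Proof.
move=> p0 q0 pq h; rewrite /c0 /=.
apply/cvgrPdist_lt => e e0.
have [n [n1 hn]] := ball_small p0 q0 pq h e0.
have [w [w0 we [s [hs sub]]]] := decr_lt hn.
near=> k; rewrite sub0r normrN.
have : (\max_(i <- s) i < k)%N by near: k; exact: nbhs_infty_gt.
move=> hk; rewrite (le_lt_trans _ we)// leNgt; apply/negP => /sub /= ks.
by have := @leq_bigmax_seq _ s xpredT (fun i => i) k ks isT; rewrite big_mkcond /= leqNgt hk.
Unshelve. all: by end_near.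
Qed.

Lemma far (ys : seq (nat -> R)) (r : R) : (forall y, y \in ys -> c0 y) ->
  (0 < r)%R -> exists N, forall y, y \in ys -> (`|y N| < r)%R.
Proof.
move=> hys r0.
suff : \forall k \near \oo, forall y, y \in ys -> (`|y k| < r)%R.
  by move=> /filter_ex [N HN]; exists N.
elim: ys hys => [|y ys IH] hys.
  by near=> k => y; rewrite in_nil.
have hy : \forall k \near \oo, (`|y k| < r)%R.
  have := hys y (mem_head _ _); rewrite /c0 /= => /cvgrPdist_lt/(_ r r0) H.
  near=> k; have : (`|0 - y k| < r)%R by near: k; exact: H.
  by rewrite sub0r normrN.
have hys' : forall z, z \in ys -> c0 z.
  by move=> z zs; apply: hys; rewrite in_cons zs orbT.
have IH' := IH hys'.
near=> k => z; rewrite in_cons => /orP[/eqP ->|zs].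
  by near: k; exact: hy.
have Hk : forall z, z \in ys -> (`|z k| < r)%R by near: k; exact: IH'.
exact: Hk.
Unshelve. all: by end_near.
Qed.

End Main.

Theorem mainTheorem11 (R : realType) (p q : \bar R) :
  (0 < p)%E -> (0 < q)%E -> (p < +oo)%E \/ (q < +oo)%E ->
  embed_alpha p q = embed_norm p q.
Proof.
move=> p0 q0 pq.
have N1 : embed_norm p q = 1%E.
  apply/eqP; rewrite eq_le; apply/andP; split.
    apply/ereal_supP => _ [a ha <-]; exact: ball_supnorm ha.
  apply: (@le_trans _ _ (supnorm (ev R 0))).
    apply: ereal_sup_ubound; exists 0%N => //=.
    by rewrite /ev eqxx normr1.
  apply: ereal_sup_ubound; exists (ev R 0) => //; exact: ev_ball.
have A1 : embed_alpha p q = 1%E.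
  apply/eqP; rewrite eq_le; apply/andP; split.
    apply: ereal_inf_lbound; exists 1%R => //; split => //.
    exists [:: 0]; split.
      move=> y; rewrite mem_seq1 => /eqP ->; rewrite /c0 /=; exact: cvg_cst.
    move=> a ha; exists 0; first by rewrite mem_seq1.
    exists a; split; first exact: ball_c0 ha.
    split; first exact: ball_supnorm ha.
    by rewrite add0r scale1r.
  apply/ereal_infP => _ [r [r0 [ys [hys hcov]]] <-]; rewrite lee_fin leNgt.
  apply/negP => r1.
  have r1' : (0 < 1 - r)%R by rewrite subr_gt0.
  have [N HN] := far hys r1'.
  have [y yys [b [cb [sb E]]]] := hcov (ev R N) (ev_ball p N q0).
  have bN : (`|b N| <= 1)%R.
    rewrite -lee_fin; apply: le_trans sb; apply: ereal_sup_ubound; by exists N.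
  have := congr1 (fun f => f N) E; rewrite /= /ev eqxx => E1.
  have := HN y yys.
  have : (`|y N + r * b N| <= `|y N| + r)%R.
    apply: le_trans (ler_normD _ _) _; rewrite lerD2l normrM gtr0_norm//.
    by rewrite -[leRHS]mulr1 ler_pM2l.
  have E2 : (1 = y N + r * b N)%R by rewrite E1.
  rewrite -E2 normr1 => h1 h2.
  have : (`|y N| + r < 1)%R by rewrite -ltrBrDr.
  by rewrite ltNge h1.
by rewrite A1 N1.
Qed.
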